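(* Let $n\ge 3$ and let $q$ be a real number with $0<q\le 1/6$. Consider the Markov chain on $\{0,1,\dots,n-1\}$ with $n\times n$ transition probability matrix $\mathbf P(q)=(P_{ij})$ given by: $P_{00}=1-q$, $P_{01}=q$; $P_{10}=5q$, $P_{11}=1-6q$, $P_{12}=q$; for $2\le i\le n-2$: $P_{i0}=4q$, $P_{i,i-1}=q$, $P_{ii}=1-6q$, $P_{i,i+1}=q$; $P_{n-1,0}=2q$, $P_{n-1,n-2}=q$, $P_{n-1,n-1}=1-3q$; all other entries $0$. Then the steady state probability vector $\vec\pi=(\pi_0,\dots,\pi_{n-1})$ (the unique probability vector with $\vec\pi=\vec\pi\mathbf P(q)$) is given by $$\pi_i=\frac{C_{n-1-i}}{\sum_{l=0}^{n-1}C_l},\qquad i=0,1,\dots,n-1.$$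
   Context: The Lucas-balancing numbers $C_m$ are defined by $C_0=1$, $C_1=3$, $C_{m+1}=6C_m-C_{m-1}$ (equivalently $C_m=\sqrt{8B_m^2+1}$ with $B_m$ the balancing numbers $B_0=0,B_1=1,B_{m+1}=6B_m-B_{m-1}$). *)

(* Defs.v *)
From HB Require Import structures.
From mathcomp Require Import all_boot all_order all_algebra.
Set Implicit Arguments. Unset Strict Implicit. Unset Printing Implicit Defensive.
Import Order.TTheory GRing.Theory Num.Theory.
Local Open Scope ring_scope.

(* Lucas-balancing numbers: C_0 = 1, C_1 = 3, C_{m+1} = 6 C_m - C_{m-1},
   computed in R via the pair (C_m, C_{m+1}). *)
Fixpoint lucas_bal_pair (R : ringType) (m : nat) : R * R :=
  match m with
  | 0%N => (1, 3%:R)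
  | m'.+1 => let p := lucas_bal_pair R m' in (p.2, 6%:R * p.2 - p.1)
  end.

Definition lucas_bal (R : ringType) (m : nat) : R := (lucas_bal_pair R m).1.

Definition Pentry (R : ringType) (n : nat) (q : R) (i j : nat) : R :=
  if i == 0%N then
    (if j == 0%N then 1 - q else if j == 1%N then q else 0)
  else if i == 1%N then
    (if j == 0%N then 5%:R * q else if j == 1%N then 1 - 6%:R * q
     else if j == 2%N then q else 0)
  else if i == n.-1 then
    (if j == 0%N then 2%:R * q else if j == n.-2 then q
     else if j == n.-1 then 1 - 3%:R * q else 0)
  else
    (if j == 0%N then 4%:R * q else if j == i.-1 then q
     else if j == i then 1 - 6%:R * q else if j == i.+1 then q else 0).

Definition Pmat (R : ringType) (n : nat) (q : R) : 'M[R]_n :=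
  \matrix_(i < n, j < n) Pentry n q i j.

Definition prob_vector (R : numDomainType) (n : nat) (pi : 'rV[R]_n) : Prop :=
  (forall j, 0 <= pi 0 j) /\ \sum_(j < n) pi 0 j = 1.

Definition stationary (R : ringType) (n : nat) (P : 'M[R]_n) (pi : 'rV[R]_n) : Prop :=
  pi = pi *m P.

(* Main.v *)
Require Import Defs.
From HB Require Import structures.
From mathcomp Require Import all_boot all_order all_algebra.
From mathcomp Require Import zify ring lra.
Import Order.TTheory GRing.Theory Num.Theory.
Local Open Scope ring_scope.

Section Aux.
Variable R : realFieldType.
Local Notation c := (lucas_bal R).

Lemma c0 : c 0 = 1. Proof. by []. Qed.
Lemma c1 : c 1 = 3%:R. Proof. by []. Qed.
Lemma cSS m : c m.+2 = 6%:R * c m.+1 - c m. Proof. by []. Qed.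

Lemma c_mono m : 0 < c m /\ c m <= c m.+1.
Proof.
elim: m => [|m [IH1 IH2]]; first by rewrite c0 c1; split; [lra|lra].
split; first lra.
rewrite cSS; lra.
Qed.

Lemma c_pos m : 0 < c m. Proof. by case: (c_mono m). Qed.

Lemma c_sum m : 4%:R * \sum_(l < m.+2) c l = 5%:R * c m.+1 - c m + 2%:R.
Proof.
elim: m => [|m IH].
  rewrite !big_ord_recr big_ord0 /= c0 c1; lra.
rewrite big_ord_recr /= mulrDr IH cSS; lra.
Qed.

Definition dl (a b : nat) : R := if a == b then 1 else 0.

Lemma sum_delta n (x : 'I_n.+1 -> R) (a : nat) : (a < n.+1)%N ->
  \sum_(i < n.+1) x i * dl i a = x (inord a).
Proof.
move=> ha.
rewrite (bigD1 (inord a)) //= /dl inordK // eqxx mulr1 big1 ?addr0 //.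
move=> i /negbTE Hi; case: eqP; last by rewrite mulr0.
move=> E; move: Hi; have -> : i = inord a by apply: val_inj; rewrite /= inordK.
by rewrite eqxx.
Qed.

Lemma Pmid k q (i j : nat) : (0 < j)%N -> (j < k.+2)%N -> (i < k.+3)%N ->
  Pentry k.+3 q i j = q * dl i j.-1 + (1 - 6%:R * q) * dl i j + q * dl i j.+1.
Proof.
move=> h1 h2 h3; rewrite /Pentry /dl /=.
repeat (case: eqP => ? /=); try lia; ring.
Qed.

Lemma Plast k q (i : nat) : (i < k.+3)%N ->
  Pentry k.+3 q i k.+2 = q * dl i k.+1 + (1 - 3%:R * q) * dl i k.+2.
Proof.
move=> h3; rewrite /Pentry /dl /=.
repeat (case: eqP => ? /=); try lia; ring.
Qed.

Lemma P0 k q (i : nat) : (i < k.+3)%N ->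
  Pentry k.+3 q i 0 = 4%:R * q + (1 - 5%:R * q) * dl i 0 + q * dl i 1
     - 2%:R * q * dl i k.+2.
Proof.
move=> h3; rewrite /Pentry /dl /=.
repeat (case: eqP => ? /=); try lia; ring.
Qed.


Lemma colE k q (pi : 'rV[R]_k.+3) (j : 'I_k.+3) :
  (pi *m Pmat k.+3 q) 0 j = \sum_(i < k.+3) pi 0 i * Pentry k.+3 q i j.
Proof. by rewrite !mxE; apply: eq_bigr => i _; rewrite mxE. Qed.

Lemma colmid k q (pi : 'rV[R]_k.+3) (j : 'I_k.+3) : (0 < j)%N -> (j < k.+2)%N ->
  (pi *m Pmat k.+3 q) 0 j = q * pi 0 (inord j.-1) + (1 - 6%:R * q) * pi 0 j
     + q * pi 0 (inord j.+1).
Proof.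
move=> h1 h2; rewrite colE.
under eq_bigr => i _ do rewrite Pmid // !mulrDr !(mulrCA (pi 0 i)).
rewrite !big_split /= -!mulr_sumr !sum_delta ?inord_val //; lia.
Qed.

Lemma collast k q (pi : 'rV[R]_k.+3) :
  (pi *m Pmat k.+3 q) 0 ord_max = q * pi 0 (inord k.+1) + (1 - 3%:R * q) * pi 0 ord_max.
Proof.
rewrite colE.
under eq_bigr => i _ do rewrite Plast // !mulrDr !(mulrCA (pi 0 i)).
rewrite !big_split /= -!mulr_sumr !sum_delta //.
by congr (_ + _ * pi 0 _); apply: val_inj; rewrite /= inordK.
Qed.

Lemma col0 k q (pi : 'rV[R]_k.+3) :
  (pi *m Pmat k.+3 q) 0 ord0 = 4%:R * q * \sum_(i < k.+3) pi 0 i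
    + (1 - 5%:R * q) * pi 0 ord0 + q * pi 0 (inord 1) - 2%:R * q * pi 0 ord_max.
Proof.
rewrite colE.
rewrite (eq_bigr (fun i : 'I_k.+3 => 4%:R * q * pi 0 i + (1 - 5%:R * q) * (pi 0 i * dl i 0)
   + q * (pi 0 i * dl i 1) - 2%:R * q * (pi 0 i * dl i k.+2))); last first.
  by move=> i _; rewrite P0 //; ring.
rewrite !big_split /= sumrN -!mulr_sumr !sum_delta //.
have -> : inord 0 = ord0 :> 'I_k.+3 by apply: val_inj; rewrite /= inordK.
by have -> : inord k.+2 = ord_max :> 'I_k.+3 by apply: val_inj; rewrite /= inordK.
Qed.

Lemma rev_sum k : \sum_(i < k.+3) c (k.+3 - 1 - i) = \sum_(l < k.+3) c l.
Proof.
rewrite (reindex_inj rev_ord_inj) /=; apply: eq_bigr => i _.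
congr (c _); have := ltn_ord i; lia.
Qed.

End Aux.

Local Notation c := (lucas_bal _).

Theorem theorem3p2 (R : realFieldType) (n : nat) (q : R)
  (hn : (3 <= n)%N) (hq0 : 0 < q) (hq1 : q <= 1 / 6%:R) (pi : 'rV[R]_n) :
  (prob_vector pi /\ stationary (Pmat n q) pi) <->
  (forall i : 'I_n,
     pi 0 i = lucas_bal R (n - 1 - i) / \sum_(l < n) lucas_bal R l).
Proof.
case: n hn pi => [|[|[|k]]] // _ pi.
set T := \sum_(l < k.+3) c l.
have Tpos : 0 < T.
  rewrite /T big_ord_recl; apply: ltr_pwDl; first exact: c_pos.
  by apply: sumr_ge0 => i _; apply: ltW; apply: c_pos.
have T0 : T != 0 by rewrite gt_eqF.
have q0 : q != 0 by rewrite gt_eqF.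
split.
- case=> [[_ Hsum] Hst].
  pose x m := pi 0 (inord (k.+2 - m)).
  have x0 : x 0%N = pi 0 ord_max.
    by rewrite /x; congr (pi 0 _); apply: val_inj; rewrite /= inordK ?subn0.
  have claim : forall m, (m.+1 <= k.+2)%N -> x m = c m * x 0%N /\ x m.+1 = c m.+1 * x 0%N.
    elim=> [|m IH] hm.
      split; first by rewrite c0 mul1r.
      have := congr1 (fun v : 'rV_ _ => v 0 ord_max) Hst; rewrite collast /=.
      have -> : pi 0 (inord k.+1) = x 1%N by rewrite /x subn1.
      rewrite -x0 c1 => E.
      have : q * (x 1%N - 3%:R * x 0%N) = 0 by lra.
      by move/eqP; rewrite mulf_eq0 (negbTE q0) /= subr_eq0 => /eqP.
    have [IH1 IH2] := IH (ltnW hm).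
    split => //.
    have hj : (k.+1 - m < k.+3)%N by lia.
    have := congr1 (fun v : 'rV_ _ => v 0 (Ordinal hj)) Hst.
    rewrite colmid /=; try lia.
    have -> : pi 0 (inord (k.+1 - m).-1) = x m.+2.
      by rewrite /x; congr (pi 0 (inord _)); lia.
    have -> : pi 0 (inord (k.+1 - m).+1) = x m.
      by rewrite /x; congr (pi 0 (inord _)); lia.
    have -> : pi 0 (Ordinal hj) = x m.+1.
      by rewrite /x; congr (pi 0 _); apply: val_inj; rewrite /= inordK; lia.
    rewrite IH1 IH2 cSS => E.
    have : q * (x m.+2 - (6%:R * c m.+1 - c m) * x 0%N) = 0 by lra.
    by move/eqP; rewrite mulf_eq0 (negbTE q0) /= subr_eq0 => /eqP.
  have claim' : forall m, (m <= k.+2)%N -> x m = c m * x 0%N.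
    by case=> [|m] hm; [rewrite c0 mul1r | exact: (claim m hm).2].
  have allx : forall i : 'I_k.+3, pi 0 i = c (k.+3 - 1 - i) * x 0%N.
    move=> i; have hi := ltn_ord i.
    have -> : (k.+3 - 1 - i = k.+2 - i)%N by lia.
    rewrite -claim'; last by lia.
    by rewrite /x; congr (pi 0 _); apply: val_inj; rewrite /= inordK; lia.
  have xT : x 0%N = 1 / T.
    move: Hsum; under eq_bigr => i _ do rewrite allx.
    rewrite -mulr_suml rev_sum -/T => E.
    by rewrite -E mulrC mulKf.
  by move=> i; rewrite allx xT mul1r.
- move=> H.
  have Hs : \sum_(j < k.+3) pi 0 j = 1.
    under eq_bigr => i _ do rewrite H.
    by rewrite -mulr_suml rev_sum -/T divff.
  split; first split => //.
    by move=> j; rewrite H divr_ge0 // ltW // c_pos.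
  apply/rowP => j.
  have hj := ltn_ord j.
  have [j0|jpos] := posnP j.
    have -> : j = ord0 by apply: val_inj.
    rewrite col0 Hs !H /= inordK //.
    have := c_sum R k.+1.
    rewrite -/T subnn c0 => E.
    have E' : 4%:R * q = q * (5%:R * c k.+2 - c k.+1 + 2%:R) / T.
      by rewrite -E; field.
    rewrite mulr1 E'; by field.
  have [jl|jge] := ltnP j k.+2.
    rewrite colmid // !H !inordK; try lia.
    have -> : (k.+3 - 1 - j.-1 = (k.+1 - j).+2)%N by lia.
    have -> : (k.+3 - 1 - j = (k.+1 - j).+1)%N by lia.
    have -> : (k.+3 - 1 - j.+1 = (k.+1 - j))%N by lia.
    rewrite cSS; by field.
  have -> : j = ord_max by apply: val_inj => /=; lia.
  rewrite collast !H /= inordK //.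
  have -> : (k.+2 - k.+1 = 1)%N by lia.
  rewrite subnn c0 c1; by field.
Qed.
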